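(* Let $A,B,C$ be finite-dimensional complex vector spaces and let $T\in A\otimes B\otimes C$ be nonzero. Then there exists a hyperplane $H_A\subset A^*$ such that $\underline{\mathbf R}(T|_{H_A\times B^*\times C^*})\le\underline{\mathbf R}(T)-1$. Equivalently, there exists a nonzero $a\in A$ such that the image $T'$ of $T$ under the projection $A\otimes B\otimes C\to (A/\langle a\rangle)\otimes B\otimes C$ satisfies $\underline{\mathbf R}(T')\le\underline{\mathbf R}(T)-1$.
   Context: The border rank $\underline{\mathbf R}(T)$ of a tensor $T$ is the smallest $r$ such that $T$ is a limit of tensors that are sums of $r$ rank one tensors $a\otimes b\otimes c$ (i.e. $[T]\in\sigma_r(Seg(\mathbb PA\times\mathbb PB\times\mathbb PC))$). *)

(* Defs.v *)
(* complex numbers modelled as pairs of Stdlib reals, since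
   border rank needs limits (topology of C). *)
From Stdlib Require Import Reals.
Open Scope R_scope.

Definition Cplx : Type := (R * R)%type.
Definition C0 : Cplx := (0, 0).
Definition Cadd (z w : Cplx) : Cplx := (fst z + fst w, snd z + snd w).
Definition Cmul (z w : Cplx) : Cplx :=
  (fst z * fst w - snd z * snd w, fst z * snd w + snd z * fst w).

Fixpoint csum (n : nat) (f : nat -> Cplx) : Cplx :=
  match n with
  | O => C0
  | S m => Cadd (csum m f) (f m)
  end.

(* Convergence of a sequence of complex numbers (coordinatewise = in modulus) *)
Definition Ccv (u : nat -> Cplx) (l : Cplx) : Prop :=
  Un_cv (fun n => fst (u n)) (fst l) /\ Un_cv (fun n => snd (u n)) (snd l).

(* A tensor in A (x) B (x) C with dim A = na, dim B = nb, dim C = nc is given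
   by its coordinates T i j k for i < na, j < nb, k < nc (other values are
   irrelevant). *)
Definition tensor : Type := nat -> nat -> nat -> Cplx.

Definition sum_rank_one (r : nat) (a b c : nat -> nat -> Cplx) : tensor :=
  fun i j k => csum r (fun l => Cmul (Cmul (a l i) (b l j)) (c l k)).

Definition border_rank_le (na nb nc : nat) (T : tensor) (r : nat) : Prop :=
  exists a b c : nat -> nat -> nat -> Cplx,
    forall i j k, (i < na)%nat -> (j < nb)%nat -> (k < nc)%nat ->
      Ccv (fun n => sum_rank_one r (a n) (b n) (c n) i j k) (T i j k).

Definition is_border_rank (na nb nc : nat) (T : tensor) (r : nat) : Prop :=
  border_rank_le na nb nc T r /\
  forall s, border_rank_le na nb nc T s -> (r <= s)%nat.

Definition tensor_nonzero (na nb nc : nat) (T : tensor) : Prop :=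
  exists i j k, (i < na)%nat /\ (j < nb)%nat /\ (k < nc)%nat /\ T i j k <> C0.

(* A hyperplane H_A of A^* given by a basis h_0, ..., h_{na-2} of linear
   forms on A (h l i = value of h_l on the i-th basis vector of A):
   na - 1 linearly independent elements of A^*. *)
Definition hyperplane_basis (na : nat) (h : nat -> nat -> Cplx) : Prop :=
  forall cf : nat -> Cplx,
    (forall i, (i < na)%nat -> csum (na - 1) (fun l => Cmul (cf l) (h l i)) = C0) ->
    forall l, (l < na - 1)%nat -> cf l = C0.

(* T restricted to H_A x B^* x C^*, written in the basis h of H_A:
   an element of H_A^* (x) B (x) C, coordinates (l, j, k) with l < na - 1. *)
Definition restrict_A (na : nat) (h : nat -> nat -> Cplx) (T : tensor) : tensor :=
  fun l j k => csum na (fun i => Cmul (h l i) (T i j k)).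

(* Main.v *)
Require Import Defs.
From Stdlib Require Import Reals Lra Lia Classical ClassicalEpsilon Arith ZArith.
Open Scope R_scope.

Lemma Ceq (z w : Cplx) : fst z = fst w -> snd z = snd w -> z = w.
Proof. destruct z, w; simpl; intros; subst; reflexivity. Qed.

Definition Copp (z : Cplx) : Cplx := (- fst z, - snd z).

Lemma csum_ext (n : nat) (f g : nat -> Cplx) :
  (forall i, (i < n)%nat -> f i = g i) -> csum n f = csum n g.
Proof.
  induction n; intros H; simpl; [reflexivity|].
  rewrite IHn by (intros; apply H; lia). rewrite H by lia. reflexivity.
Qed.

Lemma csum_add (n : nat) (f g : nat -> Cplx) :
  csum n (fun i => Cadd (f i) (g i)) = Cadd (csum n f) (csum n g).
Proof.
  induction n; simpl.
  - apply Ceq; simpl; ring.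
  - rewrite IHn. apply Ceq; simpl; ring.
Qed.

Lemma csum_mul_l (n : nat) (z : Cplx) (f : nat -> Cplx) :
  Cmul z (csum n f) = csum n (fun i => Cmul z (f i)).
Proof.
  induction n; simpl.
  - apply Ceq; simpl; ring.
  - rewrite <- IHn. apply Ceq; simpl; ring.
Qed.

Lemma csum_mul_r (n : nat) (z : Cplx) (f : nat -> Cplx) :
  Cmul (csum n f) z = csum n (fun i => Cmul (f i) z).
Proof.
  induction n; simpl.
  - apply Ceq; simpl; ring.
  - rewrite <- IHn. apply Ceq; simpl; ring.
Qed.

Lemma csum_swap (n m : nat) (F : nat -> nat -> Cplx) :
  csum n (fun i => csum m (fun l => F i l)) = csum m (fun l => csum n (fun i => F i l)).
Proof.
  induction n; simpl.
  - induction m; simpl; [reflexivity|]. rewrite <- IHm. apply Ceq; simpl; ring.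
  - rewrite IHn. rewrite <- csum_add. reflexivity.
Qed.

Lemma csum_zero (n : nat) (f : nat -> Cplx) :
  (forall i, (i < n)%nat -> f i = C0) -> csum n f = C0.
Proof.
  induction n; intros H; simpl; [reflexivity|].
  rewrite IHn by (intros; apply H; lia). rewrite H by lia. apply Ceq; simpl; ring.
Qed.

Lemma csum_delta (n p : nat) (z : Cplx) : (p < n)%nat ->
  csum n (fun i => if Nat.eqb i p then z else C0) = z.
Proof.
  induction n; intros Hp; [lia|]. simpl.
  destruct (Nat.eqb n p) eqn:E.
  - apply Nat.eqb_eq in E; subst.
    rewrite csum_zero. apply Ceq; simpl; ring.
    intros i Hi. destruct (Nat.eqb i p) eqn:E2; [apply Nat.eqb_eq in E2; lia|reflexivity].
  - apply Nat.eqb_neq in E. rewrite IHn by lia. apply Ceq; simpl; ring.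
Qed.

Lemma Cmul_eq0 (z w : Cplx) : Cmul z w = C0 -> w <> C0 -> z = C0.
Proof.
  destruct z as [a b], w as [c d]; unfold Cmul, C0; simpl; intros H Hw.
  injection H; intros H2 H1.
  assert (Hcd : c * c + d * d > 0).
  { destruct (Req_dec c 0) as [Hc|Hc], (Req_dec d 0) as [Hd|Hd]; subst.
    - exfalso; apply Hw; reflexivity.
    - pose proof (Rsqr_pos_lt d Hd); unfold Rsqr in *; nra.
    - pose proof (Rsqr_pos_lt c Hc); unfold Rsqr in *; nra.
    - pose proof (Rsqr_pos_lt c Hc); unfold Rsqr in *; nra. }
  assert (E1 : a * (c*c+d*d) = 0).
  { replace (a*(c*c+d*d)) with (c*(a*c-b*d) + d*(a*d+b*c)) by ring.
    rewrite H1, H2; ring. }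
  assert (E2 : b * (c*c+d*d) = 0).
  { replace (b*(c*c+d*d)) with (c*(a*d+b*c) - d*(a*c-b*d)) by ring.
    rewrite H1, H2; ring. }
  apply Rmult_integral in E1; apply Rmult_integral in E2.
  apply Ceq; simpl; lra.
Qed.

Lemma Ccv_const (z : Cplx) : Ccv (fun _ => z) z.
Proof.
  split; intros eps He; exists O; intros; unfold R_dist; simpl;
  rewrite Rminus_diag, Rabs_R0; lra.
Qed.

Lemma Ccv_add u v l m : Ccv u l -> Ccv v m -> Ccv (fun n => Cadd (u n) (v n)) (Cadd l m).
Proof. intros [H1 H2] [H3 H4]; split; simpl; apply CV_plus; auto. Qed.

Lemma Ccv_mul u v l m : Ccv u l -> Ccv v m -> Ccv (fun n => Cmul (u n) (v n)) (Cmul l m).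
Proof.
  intros [H1 H2] [H3 H4]; split; simpl.
  - apply CV_minus; apply CV_mult; auto.
  - apply CV_plus; apply CV_mult; auto.
Qed.

Lemma Ccv_opp u l : Ccv u l -> Ccv (fun n => Copp (u n)) (Copp l).
Proof. intros [H1 H2]; split; simpl; apply CV_opp; auto. Qed.

Lemma Ccv_csum (N : nat) (F : nat -> nat -> Cplx) (L : nat -> Cplx) :
  (forall i, (i < N)%nat -> Ccv (fun n => F n i) (L i)) ->
  Ccv (fun n => csum N (F n)) (csum N L).
Proof.
  induction N; intros H; simpl.
  - apply Ccv_const.
  - apply Ccv_add. apply IHN; intros; apply H; lia. apply H; lia.
Qed.

Definition sincr (phi : nat -> nat) := forall n, (phi n < phi (S n))%nat.

Lemma sincr_ge phi : sincr phi -> forall n, (n <= phi n)%nat.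
Proof. intros H n; induction n; [lia|]. specialize (H n); lia. Qed.

Lemma sincr_mono phi : sincr phi -> forall m n, (m <= n)%nat -> (phi m <= phi n)%nat.
Proof. intros H m n Hmn; induction Hmn; [lia|]. specialize (H m0); lia. Qed.

Lemma sincr_comp phi psi : sincr phi -> sincr psi -> sincr (fun n => phi (psi n)).
Proof.
  intros H1 H2 n. pose proof (sincr_mono phi H1 (S (psi n)) (psi (S n)) (H2 n)).
  specialize (H1 (psi n)); lia.
Qed.

Lemma Un_cv_sub u l phi : sincr phi -> Un_cv u l -> Un_cv (fun n => u (phi n)) l.
Proof.
  intros Hp H eps He. destruct (H eps He) as [N HN]. exists N; intros n Hn.
  apply HN. pose proof (sincr_ge phi Hp n); lia.
Qed.

Lemma Ccv_sub u l phi : sincr phi -> Ccv u l -> Ccv (fun n => u (phi n)) l.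
Proof. intros Hp [H1 H2]; split; [apply (Un_cv_sub (fun n => fst (u n)) _ _ Hp) | apply (Un_cv_sub (fun n => snd (u n)) _ _ Hp)]; auto. Qed.

Lemma select_sub (P : nat -> nat -> Prop) :
  (forall k N, exists p, (N <= p)%nat /\ P k p) ->
  exists phi, sincr phi /\ forall n, P n (phi n).
Proof.
  intros H.
  assert (G : forall k N, {p | (N <= p)%nat /\ P k p}).
  { intros k N. apply constructive_indefinite_description. apply H. }
  set (g := fun k N => proj1_sig (G k N)).
  pose (phi := fix f (n : nat) : nat := match n with O => g O O | S m => g (S m) (S (f m)) end).
  exists phi; split.
  - intros n. change (phi (S n)) with (g (S n) (S (phi n))). unfold g.
    destruct (proj2_sig (G (S n) (S (phi n)))) as [Hp _]. lia.
  - intros [|n].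
    + change (phi O) with (g O O). unfold g. exact (proj2 (proj2_sig (G O O))).
    + change (phi (S n)) with (g (S n) (S (phi n))). unfold g.
      exact (proj2 (proj2_sig (G (S n) (S (phi n))))).
Qed.

Lemma BW1 (u : nat -> R) : (forall n, Rabs (u n) <= 1) ->
  exists phi l, sincr phi /\ Un_cv (fun n => u (phi n)) l.
Proof.
  intros Hb.
  destruct (Bolzano_Weierstrass u (fun c => -1 <= c <= 1) (compact_P3 (-1) 1))
    as [l Hl].
  { intros n; specialize (Hb n); unfold Rabs in Hb; destruct (Rcase_abs (u n)); lra. }
  destruct (select_sub (fun k p => Rabs (u p - l) < / INR (S k))) as [phi [Hphi HP]].
  { intros k N.
    assert (Hpos : 0 < / INR (S k)) by (apply Rinv_0_lt_compat, lt_0_INR; lia).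
    destruct (Hl (disc l (mkposreal _ Hpos)) N) as [p [Hp1 Hp2]].
    - exists (mkposreal _ Hpos). intros y Hy; exact Hy.
    - exists p; split; auto. }
  exists phi, l; split; auto.
  intros eps He.
  destruct (archimed (/ eps)) as [Ha _].
  assert (Hinv : 0 < / eps) by (apply Rinv_0_lt_compat; lra).
  exists (Z.to_nat (up (/ eps))). intros n Hn.
  unfold Rdist. eapply Rlt_le_trans; [apply HP|].
  assert (HK : / eps < INR (S n)).
  { apply Rlt_le_trans with (IZR (up (/ eps))); [lra|].
    rewrite INR_IZR_INZ. apply IZR_le.
    assert (0 <= up (/ eps))%Z.
    { apply le_IZR. lra. }
    rewrite <- (Z2Nat.id (up (/eps))) by lia. apply inj_le. lia. }
  rewrite <- (Rinv_inv eps).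
  apply Rlt_le, Rinv_lt_contravar; [|exact HK].
  apply Rmult_lt_0_compat; [exact Hinv| lra].
Qed.

Lemma BWC (k : nat) (z : nat -> nat -> Cplx) :
  (forall n i, (i < k)%nat -> Rabs (fst (z n i)) <= 1 /\ Rabs (snd (z n i)) <= 1) ->
  exists phi v, sincr phi /\ forall i, (i < k)%nat -> Ccv (fun n => z (phi n) i) (v i).
Proof.
  induction k; intros Hb.
  - exists (fun n => n), (fun _ => C0). split; [intros n; lia| intros; lia].
  - destruct IHk as [phi [v [Hphi Hv]]]. { intros; apply Hb; lia. }
    destruct (BW1 (fun n => fst (z (phi n) k))) as [psi1 [l1 [Hp1 Hl1]]].
    { intros; apply Hb; lia. }
    destruct (BW1 (fun n => snd (z (phi (psi1 n)) k))) as [psi2 [l2 [Hp2 Hl2]]].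
    { intros; apply Hb; lia. }
    exists (fun n => phi (psi1 (psi2 n))), (fun i => if Nat.eqb i k then (l1, l2) else v i).
    split.
    + apply sincr_comp; auto. apply sincr_comp; auto.
    + intros i Hi. destruct (Nat.eqb i k) eqn:E.
      * apply Nat.eqb_eq in E; subst. split; simpl.
        -- apply (Un_cv_sub (fun n => fst (z (phi (psi1 n)) k)) _ _ Hp2). exact Hl1.
        -- exact Hl2.
      * apply Nat.eqb_neq in E.
        apply (Ccv_sub (fun n => z (phi n) i) _ (fun n => psi1 (psi2 n))).
        apply sincr_comp; auto. apply Hv; lia.
Qed.

Fixpoint rsum (n : nat) (f : nat -> R) : R :=
  match n with O => 0 | S m => rsum m f + f m end.

Lemma rsum_ext n f g : (forall i, (i < n)%nat -> f i = g i) -> rsum n f = rsum n g.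
Proof. induction n; intros H; simpl; auto. rewrite IHn by (intros; apply H; lia). rewrite H by lia; auto. Qed.

Lemma rsum_ge0 n f : (forall i, (i < n)%nat -> 0 <= f i) -> 0 <= rsum n f.
Proof. induction n; intros H; simpl; [lra|]. pose proof (IHn (fun i Hi => H i ltac:(lia))). pose proof (H n ltac:(lia)). lra. Qed.

Lemma rsum_le n f i : (forall i, (i < n)%nat -> 0 <= f i) -> (i < n)%nat -> f i <= rsum n f.
Proof.
  induction n; intros H Hi; simpl; [lia|].
  pose proof (rsum_ge0 n f (fun j Hj => H j ltac:(lia))).
  destruct (Nat.eq_dec i n); [subst; lra|].
  pose proof (IHn (fun j Hj => H j ltac:(lia)) ltac:(lia)). pose proof (H n ltac:(lia)). lra.
Qed.

Lemma rsum_scal n c f : rsum n (fun i => c * f i) = c * rsum n f.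
Proof. induction n; simpl; [ring|]. rewrite IHn; ring. Qed.

Lemma rsum_all0 n f : (forall i, (i < n)%nat -> f i = 0) -> rsum n f = 0.
Proof. intros H. rewrite (rsum_ext n f (fun _ => 0)) by auto. induction n; simpl; [ring|]. rewrite IHn by (intros; apply H; lia). ring. Qed.

Lemma Un_cv_rsum (N : nat) (F : nat -> nat -> R) (L : nat -> R) :
  (forall i, (i < N)%nat -> Un_cv (fun n => F n i) (L i)) ->
  Un_cv (fun n => rsum N (F n)) (rsum N L).
Proof.
  induction N; intros H; simpl.
  - intros eps He; exists O; intros; unfold Rdist; rewrite Rminus_diag, Rabs_R0; lra.
  - apply CV_plus. apply IHN; intros; apply H; lia. apply H; lia.
Qed.

Definition sig (i0 l : nat) : nat := if Nat.ltb l i0 then l else S l.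
Definition Hmat (i0 : nat) (w : nat -> Cplx) (l i : nat) : Cplx :=
  if Nat.eqb i i0 then Copp (w (sig i0 l)) else if Nat.eqb (sig i0 l) i then w i0 else C0.

Lemma sig_ne i0 l : sig i0 l <> i0.
Proof. unfold sig; destruct (Nat.ltb_spec l i0); lia. Qed.
Lemma sig_lt i0 l na : (i0 < na)%nat -> (l < na - 1)%nat -> (sig i0 l < na)%nat.
Proof. unfold sig; destruct (Nat.ltb_spec l i0); lia. Qed.
Lemma sig_inj i0 l l' : sig i0 l = sig i0 l' -> l = l'.
Proof. unfold sig; destruct (Nat.ltb_spec l i0), (Nat.ltb_spec l' i0); lia. Qed.

Lemma hyper na i0 v : (i0 < na)%nat -> v i0 <> C0 -> hyperplane_basis na (Hmat i0 v).
Proof.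
  intros Hi0 Hv cf Hcf l Hl.
  specialize (Hcf (sig i0 l) (sig_lt i0 l na Hi0 Hl)).
  rewrite (csum_ext _ _ (fun l'' => if Nat.eqb l'' l then Cmul (cf l) (v i0) else C0)) in Hcf.
  - rewrite csum_delta in Hcf by exact Hl. exact (Cmul_eq0 _ _ Hcf Hv).
  - intros l'' Hl''. unfold Hmat.
    destruct (Nat.eqb_spec (sig i0 l) i0) as [E|E]; [exfalso; exact (sig_ne _ _ E)|].
    destruct (Nat.eqb_spec (sig i0 l'') (sig i0 l)) as [E2|E2];
    destruct (Nat.eqb_spec l'' l) as [E3|E3].
    + subst; reflexivity.
    + exfalso; apply E3; exact (sig_inj _ _ _ E2).
    + subst; exfalso; apply E2; reflexivity.
    + apply Ceq; simpl; ring.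
Qed.

Lemma Hx_zero na i0 l (y x : nat -> Cplx) (s : R) : (i0 < na)%nat -> (l < na - 1)%nat ->
  (forall i, (i < na)%nat -> x i = (s * fst (y i), s * snd (y i))) ->
  csum na (fun i => Cmul (Hmat i0 y l i) (x i)) = C0.
Proof.
  intros Hi0 Hl Hx.
  pose proof (sig_ne i0 l) as Hne. pose proof (sig_lt i0 l na Hi0 Hl) as Hslt.
  set (q := sig i0 l) in *.
  rewrite (csum_ext _ _ (fun i => Cadd (if Nat.eqb i i0 then Cmul (Copp (y q)) (x i0) else C0)
                                     (if Nat.eqb i q then Cmul (y i0) (x q) else C0))).
  - rewrite csum_add, !csum_delta by assumption.
    rewrite !Hx by assumption. apply Ceq; simpl; ring.
  - intros i Hi. unfold Hmat. fold q. clearbody q.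
    destruct (Nat.eqb_spec i i0) as [E|E]; destruct (Nat.eqb_spec i q) as [E2|E2];
    destruct (Nat.eqb_spec q i) as [E3|E3]; subst; try lia; apply Ceq; simpl; ring.
Qed.

Lemma Ccv_ext u w l : (forall n, u n = w n) -> Ccv u l -> Ccv w l.
Proof.
  intros H [H1 H2]; split; intros eps He;
  [destruct (H1 eps He) as [N HN] | destruct (H2 eps He) as [N HN]];
  exists N; intros n Hn; rewrite <- H; apply HN; auto.
Qed.

Lemma csum_assoc3 n (h x : nat -> Cplx) (B C : Cplx) :
  csum n (fun i => Cmul (h i) (Cmul (Cmul (x i) B) C)) =
  Cmul (Cmul (csum n (fun i => Cmul (h i) (x i))) B) C.
Proof.
  rewrite !csum_mul_r. apply csum_ext; intros. apply Ceq; simpl; ring.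
Qed.

Lemma main_gen na nb nc (T : tensor) r' (a b c : nat -> nat -> nat -> Cplx) phi i0 v
  (y : nat -> nat -> Cplx) (s : nat -> R) :
  (forall i j k, (i < na)%nat -> (j < nb)%nat -> (k < nc)%nat ->
     Ccv (fun n => sum_rank_one (S r') (a n) (b n) (c n) i j k) (T i j k)) ->
  sincr phi -> (i0 < na)%nat -> v i0 <> C0 ->
  (forall i, (i < na)%nat -> Ccv (fun n => y n i) (v i)) ->
  (forall n i, (i < na)%nat -> a (phi n) r' i = (s n * fst (y n i), s n * snd (y n i))) ->
  exists h, hyperplane_basis na h /\ border_rank_le (na - 1) nb nc (restrict_A na h T) r'.
Proof.
  intros HT Hphi Hi0 Hv Hy Ha.
  exists (Hmat i0 v). split; [apply hyper; auto|].
  exists (fun n m l => csum na (fun i => Cmul (Hmat i0 (y n) l i) (a (phi n) m i))),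
         (fun n => b (phi n)), (fun n => c (phi n)).
  intros l j k Hl Hj Hk.
  apply (Ccv_ext (fun n => csum na (fun i => Cmul (Hmat i0 (y n) l i)
           (sum_rank_one (S r') (a (phi n)) (b (phi n)) (c (phi n)) i j k)))).
  - intros n. unfold sum_rank_one. simpl csum at 2.
    rewrite (csum_ext na _ (fun i => Cadd
       (Cmul (Hmat i0 (y n) l i) (csum r' (fun m => Cmul (Cmul (a (phi n) m i) (b (phi n) m j)) (c (phi n) m k))))
       (Cmul (Hmat i0 (y n) l i) (Cmul (Cmul (a (phi n) r' i) (b (phi n) r' j)) (c (phi n) r' k))))).
    2:{ intros; apply Ceq; simpl; ring. }
    rewrite csum_add, csum_assoc3.
    rewrite (Hx_zero na i0 l (y n) (a (phi n) r') (s n)) by auto.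
    rewrite (csum_ext na _ (fun i => csum r' (fun m => Cmul (Hmat i0 (y n) l i)
          (Cmul (Cmul (a (phi n) m i) (b (phi n) m j)) (c (phi n) m k))))).
    2:{ intros; apply csum_mul_l. }
    rewrite csum_swap.
    rewrite (csum_ext r' _ (fun m => Cmul (Cmul (csum na (fun i => Cmul (Hmat i0 (y n) l i) (a (phi n) m i))) (b (phi n) m j)) (c (phi n) m k))).
    + apply Ceq; simpl; ring.
    + intros; apply csum_assoc3.
  - unfold restrict_A. apply Ccv_csum. intros i Hi.
    apply Ccv_mul.
    + unfold Hmat. destruct (Nat.eqb i i0).
      * apply Ccv_opp, Hy, sig_lt; auto.
      * destruct (Nat.eqb (sig i0 l) i). apply Hy; auto. apply Ccv_const.
    + apply (Ccv_sub (fun n => sum_rank_one (S r') (a n) (b n) (c n) i j k)); auto.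
Qed.

Lemma Un_cv_ext' u w l : (forall n, u n = w n) -> Un_cv u l -> Un_cv w l.
Proof. intros H H1 eps He; destruct (H1 eps He) as [N HN]; exists N; intros n Hn; rewrite <- H; apply HN; auto. Qed.

Lemma Un_cv_const c : Un_cv (fun _ => c) c.
Proof. intros eps He; exists O; intros; unfold Rdist; rewrite Rminus_diag, Rabs_R0; lra. Qed.

Lemma Rabs_divN f N : 0 < N -> Rabs (f / N) = / N * Rabs f.
Proof. intros H; unfold Rdiv; rewrite Rabs_mult, Rabs_inv, (Rabs_pos_eq N) by lra; ring. Qed.

Lemma Rabs_divN_le f N : 0 < N -> Rabs f <= N -> Rabs (f / N) <= 1.
Proof.
  intros H H1; rewrite Rabs_divN by auto.
  apply Rmult_le_reg_l with N; [lra|]. rewrite <- Rmult_assoc, Rinv_r by lra. lra.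
Qed.

Theorem lemma5p2 (na nb nc : nat) (T : tensor) (r : nat) :
  tensor_nonzero na nb nc T ->
  is_border_rank na nb nc T r ->
  exists h : nat -> nat -> Cplx,
    hyperplane_basis na h /\
    border_rank_le (na - 1) nb nc (restrict_A na h T) (r - 1).
Proof.
  intros [i [j [k [Hi [Hj [Hk Hne]]]]]] [[a [b [c HT]]] _].
  destruct r as [|r'].
  - exfalso. destruct (HT i j k Hi Hj Hk) as [H1 H2]. apply Hne.
    assert (E1 : fst (T i j k) = 0).
    { apply (UL_sequence (fun _ => 0)); [|apply Un_cv_const]. exact H1. }
    assert (E2 : snd (T i j k) = 0).
    { apply (UL_sequence (fun _ => 0)); [|apply Un_cv_const]. exact H2. }
    apply Ceq; auto.
  - replace (S r' - 1)%nat with r' by lia.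
    set (Nrm := fun n => rsum na (fun i => Rabs (fst (a n r' i)) + Rabs (snd (a n r' i)))).
    assert (Nrm_ge0 : forall n, 0 <= Nrm n).
    { intros n; apply rsum_ge0; intros; pose proof (Rabs_pos (fst (a n r' i0))); pose proof (Rabs_pos (snd (a n r' i0))); lra. }
    assert (Nrm_le : forall n i, (i < na)%nat -> Rabs (fst (a n r' i)) <= Nrm n /\ Rabs (snd (a n r' i)) <= Nrm n).
    { intros n i0 Hi0. pose proof (rsum_le na (fun i => Rabs (fst (a n r' i)) + Rabs (snd (a n r' i))) i0).
      pose proof (Rabs_pos (fst (a n r' i0))); pose proof (Rabs_pos (snd (a n r' i0))).
      assert (Rabs (fst (a n r' i0)) + Rabs (snd (a n r' i0)) <= Nrm n).
      { apply H; auto. intros; pose proof (Rabs_pos (fst (a n r' i1))); pose proof (Rabs_pos (snd (a n r' i1))); lra. }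
      lra. }
    destruct (classic (forall N0, exists p, (N0 <= p)%nat /\ Nrm p <> 0)) as [HB|HA].
    + destruct (select_sub (fun _ p => Nrm p <> 0)) as [phi0 [Hphi0 HN0]].
      { intros _ N0; apply HB. }
      set (z := fun n i => (fst (a (phi0 n) r' i) / Nrm (phi0 n), snd (a (phi0 n) r' i) / Nrm (phi0 n))).
      assert (Npos : forall n, 0 < Nrm (phi0 n)).
      { intros n; pose proof (Nrm_ge0 (phi0 n)); pose proof (HN0 n); lra. }
      destruct (BWC na z) as [phi1 [v [Hphi1 Hv]]].
      { intros n i0 Hi0. unfold z; simpl. destruct (Nrm_le (phi0 n) i0 Hi0).
        split; apply Rabs_divN_le; auto. }
      assert (Hsum1 : forall n, rsum na (fun i => Rabs (fst (z (phi1 n) i)) + Rabs (snd (z (phi1 n) i))) = 1).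
      { intros n. unfold z; simpl.
        rewrite (rsum_ext na _ (fun i => / Nrm (phi0 (phi1 n)) * (Rabs (fst (a (phi0 (phi1 n)) r' i)) + Rabs (snd (a (phi0 (phi1 n)) r' i))))).
        - rewrite rsum_scal. fold (Nrm (phi0 (phi1 n))). apply Rinv_l. apply HN0.
        - intros; rewrite !Rabs_divN by auto; ring. }
      assert (Hlim : rsum na (fun i => Rabs (fst (v i)) + Rabs (snd (v i))) = 1).
      { apply (UL_sequence (fun _ => 1)); [|apply Un_cv_const].
        apply (Un_cv_ext' (fun n => rsum na (fun i => Rabs (fst (z (phi1 n) i)) + Rabs (snd (z (phi1 n) i))))); auto.
        apply Un_cv_rsum. intros i0 Hi0. destruct (Hv i0 Hi0) as [Hf Hs].
        apply CV_plus; apply cv_cvabs; auto. }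
      destruct (classic (exists i0, (i0 < na)%nat /\ v i0 <> C0)) as [[i0 [Hi0 Hvi0]]|Hno].
      * apply (main_gen na nb nc T r' a b c (fun n => phi0 (phi1 n)) i0 v (fun n => z (phi1 n))
                 (fun n => Nrm (phi0 (phi1 n)))); auto.
        -- apply sincr_comp; auto.
        -- intros n i1 Hi1. unfold z; apply Ceq; simpl; field; apply HN0.
      * exfalso. rewrite rsum_all0 in Hlim. lra.
        intros i0 Hi0. destruct (classic (v i0 = C0)) as [E|E].
        -- rewrite E; simpl; rewrite Rabs_R0; ring.
        -- exfalso; apply Hno; eauto.
    + destruct (not_all_ex_not _ _ HA) as [N0 HN0].
      assert (HZ : forall p, (N0 <= p)%nat -> Nrm p = 0).
      { intros p Hp. destruct (Req_dec (Nrm p) 0); auto. exfalso; apply HN0; eauto. }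
      set (e0 := fun i : nat => if Nat.eqb i 0 then (1, 0) else C0).
      apply (main_gen na nb nc T r' a b c (fun n => (n + N0)%nat) 0 e0 (fun _ => e0) (fun _ => 0)); auto.
      * intros n; lia.
      * lia.
      * unfold e0; simpl. intros E; injection E; lra.
      * intros; apply Ccv_const.
      * intros n i0 Hi0. destruct (Nrm_le (n + N0)%nat i0 Hi0) as [L1 L2].
        rewrite HZ in L1, L2 by lia.
        pose proof (Rabs_pos (fst (a (n + N0)%nat r' i0))); pose proof (Rabs_pos (snd (a (n + N0)%nat r' i0))).
        assert (Rabs (fst (a (n + N0)%nat r' i0)) = 0) as F1 by lra.
        assert (Rabs (snd (a (n + N0)%nat r' i0)) = 0) as F2 by lra.
        assert (G1 : fst (a (n + N0)%nat r' i0) = 0) by (destruct (Req_dec (fst (a (n + N0)%nat r' i0)) 0); auto; exfalso; eapply Rabs_no_R0; eauto).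
        assert (G2 : snd (a (n + N0)%nat r' i0) = 0) by (destruct (Req_dec (snd (a (n + N0)%nat r' i0)) 0); auto; exfalso; eapply Rabs_no_R0; eauto).
        apply Ceq; simpl; rewrite ?G1, ?G2; ring.
Qed.
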